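(* For every nonnegative integer $n$, \[ \sum_{k=0}^{2n}\frac{(-1)^k}{\binom{2n}{k}}H_{k}^2 =\frac{1+2n}{2+2n}\bigg\{H_{1+2n}^2-\frac{H_{1+2n}}{1+n} -H_{1+2n}^{\langle2\rangle}+H_{1+n}^{\langle2\rangle}\bigg\}. \]
   Context: For a nonnegative integer $m$, $H_m=\sum_{j=1}^m\frac1j$ and $H_m^{\langle2\rangle}=\sum_{j=1}^m\frac{1}{j^2}$ (both equal to $0$ when $m=0$). *)

(* Defs.v *)
From mathcomp Require Import all_boot all_order all_algebra.
Set Implicit Arguments. Unset Strict Implicit. Unset Printing Implicit Defensive.
Import Order.TTheory GRing.Theory Num.Theory.
Local Open Scope ring_scope.

Definition H (m : nat) : rat := \sum_(1 <= j < m.+1) (j%:R)^-1.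
Definition H2 (m : nat) : rat := \sum_(1 <= j < m.+1) (j%:R ^+ 2)^-1.

(* Main.v *)
Require Import Defs.
From mathcomp Require Import all_boot all_order all_algebra.
From mathcomp Require Import ring lra zify.
Import Order.TTheory GRing.Theory Num.Theory.
Local Open Scope ring_scope.

Ltac nz := repeat (apply/andP; split); first [assumption | apply: lt0r_neq0; lra].

Definition T (M : nat) (f : nat -> rat) : rat :=
  \sum_(0 <= k < M.+1) ((-1) ^+ k / ('C(M, k))%:R * f k).

Lemma binC_neq0 m k : (k <= m)%N -> ('C(m, k)%:R : rat) != 0.
Proof. by move=> h; rewrite pnatr_eq0 -lt0n bin_gt0. Qed.

Lemma T_lin M a (f g : nat -> rat) :
  T M (fun k => a * f k + g k) = a * T M f + T M g.
Proof.
rewrite /T mulr_sumr -big_split /=; apply: eq_bigr => k _; ring.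
Qed.

Lemma T_ext M (f g : nat -> rat) :
  (forall k, (k <= M)%N -> f k = g k) -> T M f = T M g.
Proof.
move=> h; rewrite /T; apply: eq_big_nat => k /andP[_ hk].
by rewrite h.
Qed.

Lemma L1 M (f : nat -> rat) :
  T M (fun k => (M.+1 - k)%:R * f k + k.+1%:R * f k.+1)
  = M.+1%:R * (f 0%N - (-1) ^+ M.+1 * f M.+1).
Proof.
pose a k := (-1) ^+ k / ('C(M.+1, k))%:R * f k.
rewrite /T (telescope_sumr_eq (fun k => - (M.+1%:R * a k))) //.
  by rewrite /a bin0 binn expr0 invr1 !mulr1 !mul1r; ring.
move=> k /andP[_ hk]; rewrite /a.
have x0 := @binC_neq0 M k hk.
have y0 : ('C(M.+1, k)%:R : rat) != 0 by apply: binC_neq0; exact: ltnW.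
have z0 : ('C(M.+1, k.+1)%:R : rat) != 0 by apply: binC_neq0.
have e1 : ((M.+1 - k)%:R : rat) = M.+1%:R * 'C(M, k)%:R / 'C(M.+1, k)%:R.
  by apply: (mulIf y0); rewrite mulfVK // -!natrM -mul_bin_down.
have e2 : (k.+1%:R : rat) = M.+1%:R * 'C(M, k)%:R / 'C(M.+1, k.+1)%:R.
  by apply: (mulIf z0); rewrite mulfVK // -!natrM mul_bin_diag.
rewrite e1 e2 exprS; field.
by rewrite x0 y0 z0.
Qed.

Lemma T1 M : T M (fun _ => 1) = M.+1%:R * (1 - (-1) ^+ M.+1) / M.+2%:R.
Proof.
have := L1 M (fun _ => 1).
rewrite (@T_ext M _ (fun _ => M.+2%:R * 1 + 0)); last first.
  by move=> k hk; rewrite addr0 !mulr1 -natrD; congr (_%:R); lia.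
rewrite (T_lin M M.+2%:R (fun _ => 1) (fun _ => 0)) => h.
have T0 : T M (fun _ => 0) = 0 by rewrite /T big1 // => k _; rewrite mulr0.
rewrite T0 addr0 mulr1 in h; rewrite -h; field.
have ? := ler0n rat M; nz.
Qed.

Lemma T_scale M a (f : nat -> rat) : T M (fun k => a * f k) = a * T M f.
Proof. by rewrite /T mulr_sumr; apply: eq_bigr => k _; ring. Qed.

Lemma HS k : H k.+1 = H k + (k.+1%:R)^-1.
Proof. by rewrite /H big_nat_recr. Qed.
Lemma H0 : H 0 = 0.
Proof. by rewrite /H big_geq. Qed.
Lemma H2S k : H2 k.+1 = H2 k + (k.+1%:R ^+ 2)^-1.
Proof. by rewrite /H2 big_nat_recr. Qed.
Lemma H20 : H2 0 = 0.
Proof. by rewrite /H2 big_geq. Qed.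

Definition r (k : nat) : rat := (k.+1%:R)^-1.

Lemma TH M : M.+2%:R * T M H + T M (fun _ => 1)
  = - (M.+1%:R * ((-1) ^+ M.+1 * H M.+1)).
Proof.
have := L1 M H.
rewrite (@T_ext M _ (fun k => M.+2%:R * H k + 1)); last first.
  move=> k hk; rewrite HS natrB; last by apply: ltnW.
  have ? := ler0n rat k; field; nz.
rewrite T_lin H0 => ->; ring.
Qed.

Lemma TH2 M : M.+2%:R * T M (fun k => H k ^+ 2) + (2 * T M H + T M r)
  = - (M.+1%:R * ((-1) ^+ M.+1 * H M.+1 ^+ 2)).
Proof.
have := L1 M (fun k => H k ^+ 2).
rewrite (@T_ext M _ (fun k => M.+2%:R * H k ^+ 2 + (2 * H k + r k))); last first.
  move=> k hk; rewrite HS natrB /r; last by apply: ltnW.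
  have ? := ler0n rat k; field; nz.
rewrite T_lin T_lin H0 => ->; ring.
Qed.

Lemma Trec m : T m.+1 r = m.+2%:R / m.+1%:R * T m r - T m (fun _ => 1) / m.+1%:R
  + (-1) ^+ m.+1 / m.+2%:R.
Proof.
rewrite {1}/T big_nat_recr //= binn.
have -> : \sum_(0 <= k < m.+1) ((-1) ^+ k / ('C(m.+1, k))%:R * r k)
   = T m (fun k => (m.+2%:R / m.+1%:R) * r k + (- (m.+1%:R)^-1) * 1).
  apply: eq_big_nat => k /andP[_ hk].
  have x0 := @binC_neq0 m k hk.
  have e : ('C(m.+1, k)%:R : rat) = m.+1%:R * 'C(m, k)%:R / (m.+1 - k)%:R.
    have p0 : ((m.+1 - k)%:R : rat) != 0 by rewrite pnatr_eq0 subn_eq0 -ltnNge.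
    by apply: (mulIf p0); rewrite mulfVK // -!natrM mul_bin_down mulnC.
  rewrite e natrB /r; last by apply: ltnW.
  have ? := ler0n rat k; have ? : (k%:R : rat) <= m%:R by rewrite ler_nat.
  field; nz.
rewrite (T_lin m (m.+2%:R / m.+1%:R) r (fun _ => - (m.+1%:R)^-1 * 1)) (T_scale m _ (fun _ => 1)) /r; field.
have ? := ler0n rat m; nz.
Qed.

Lemma sgn_even n : (-1) ^+ (2 * n) = 1 :> rat.
Proof. by rewrite exprM sqrrN !expr1n. Qed.

Lemma Tr_closed n : T (2 * n) r = (2 * n).+1%:R * (H2 (2 * n).+1 - H2 n).
Proof.
elim: n => [|n IH].
  by rewrite /T big_nat1 /r !H2S H20 expr0 bin0; field.
have -> : (2 * n.+1 = (2 * n).+2)%N by lia.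
rewrite Trec Trec IH !T1 !H2S.
rewrite !exprS sgn_even.
have ? := ler0n rat n.
field; nz.
Qed.

Theorem proposition1 (n : nat) :
  \sum_(0 <= k < (2 * n).+1) ((-1) ^+ k / ('C(2 * n, k))%:R * H k ^+ 2)
  = ((1 + 2 * n)%:R / (2 + 2 * n)%:R) *
    (H (1 + 2 * n) ^+ 2 - H (1 + 2 * n) / (1 + n)%:R
     - H2 (1 + 2 * n) + H2 (1 + n)).
Proof.
change (T (2 * n) (fun k => H k ^+ 2) = ((1 + 2 * n)%:R / (2 + 2 * n)%:R) *
    (H (1 + 2 * n) ^+ 2 - H (1 + 2 * n) / (1 + n)%:R
     - H2 (1 + 2 * n) + H2 (1 + n))).
have hA := TH2 (2 * n).
have hB := TH (2 * n).
have h1 := T1 (2 * n).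
have hr := Tr_closed n.
rewrite !exprS sgn_even in hA hB h1.
rewrite !add1n add2n (H2S n).
set A := T _ (fun k => H k ^+ 2) in hA *.
set B := T _ H in hA hB.
set C := T _ (fun _ => 1) in hB h1.
set D := T _ r in hA hr.
have ? := ler0n rat n.
have hA' : A = ((2 * n).+2%:R * A + (2 * B + D) - (2 * B + D)) / (2 * n).+2%:R.
  by field; nz.
rewrite hA in hA'.
have hB' : B = ((2 * n).+2%:R * B + C - C) / (2 * n).+2%:R.
  by field; nz.
rewrite hB in hB'.
rewrite hA' hB' h1 hr.
have ? := ler0n rat n.
field; nz.
Qed.
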